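(* Let $\tau$ be a nice vocabulary, $m,k\in\mathbb N$, and let $\mathfrak K$ be an $m$-ary $PW(k)$-class of $\tau$-structures. Then $\mathfrak K$ is $(m,0)$-constructible.
   Context: Vocabularies are finite and relational; a vocabulary is nice if every relation symbol has positive arity. $m$-ary $PW(k)$-class: for a nice $\tau$, a class $\mathfrak K$ of $\tau$-structures is an $m$-ary $PW(k)$-class if there are a vocabulary $\tau^+\supseteq\tau$ with $|\tau^+\setminus\tau|=k$ and every relation in $\tau^+\setminus\tau$ of arity at most $m$, and a finite set $\mathfrak P$ of $\tau^+$-structures, such that $\mathfrak K$ consists exactly of the $\tau$-reducts of structures in the closure of $\mathfrak P$ under: disjoint union; recoloring $\rho_{i\to j}$ (for unary auxiliary predicates, move all elements of $P_i$ to $P_j$); modifications $\delta_{R,B}$ (redefine a relation $R$ by a quantifier-free formula $B$ of $\tau^+$). A $k$-const structure is $(M,a_1,\dots,a_k)$ with $a_i\in|M|$. Addition operations $\mathfrak S_{\tau,k,k_1,k_2}$: an element $\mathbf s$ consists of sets $A_l\subseteq\{1,\dots,k_l\}$, injections $g_l:A_l\to\{1,\dots,k\}$ with disjoint images covering $\{1,\dots,k\}$, sets $B_l\subseteq\{1,\dots,k_l\}^2$, $B\subseteq\{1,\dots,k_1\}\times\{1,\dots,k_2\}$, and for each $R\in\tau$ of arity $n$ and $w_1,w_2\subseteq\{1,\dots,n\}$ a $\{\mathbb T,\mathbb F\}$-valued function $f_{R,w_1,w_2}$ on triples $(p,q_1,q_2)$ ($p$ a quantifier-free $n$-type in a vocabulary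 of $k_1+k_2$ constants and two unary predicates, $q_l$ a quantifier-free $\tau$-type in $(x_i)_{i\in w_l}$). For $k_l$-const $(M_l,\bar a^l)$ with $|M_1|\cap|M_2|\subseteq\{a^1_i\}\cap\{a^2_j\}$, $a^l_i=a^l_j\iff(i,j)\in B_l$, $a^1_i=a^2_j\iff(i,j)\in B$, the sum $M_1\circledast_{\mathbf s}M_2$ is the $k$-const structure with universe $(|M_1|\setminus\{a^1_i\})\cup(|M_2|\setminus\{a^2_i\})\cup\{a^l_i:i\in A_l\}$, constants $b_{g_l(i)}=a^l_i$, and $R(\bar x)$ given by $f_{R,w_1,w_2}(p,q_1,q_2)$ where $w_l=\{i:x_i\in|M_l|\}$, $p$ is the quantifier-free type of $\bar x$ over all constants $a^l_i$ and the predicates $|M_1|,|M_2|$, and $q_l$ the quantifier-free type of $(x_i)_{i\in w_l}$ in $M_l$. Empty structures $\mathrm{Null}_X$ are allowed. A class $\mathfrak K$ of $\tau$-structures is $(m^*,k^* )$-constructible if there are a finite relational $\tau^+\supseteq\tau$ with all relations in $\tau^+\setminus\tau$ of arity $\le m^*$, a finite set $\mathfrak P$ of $k$-const $\tau^+$-structures ($k\le k^*$), and a finite set $\mathfrak S$ of addition operations in $\mathfrak S_{\tau^+,k,k_1,k_2}$ with $k,k_1,k_2\le k^*$, such that $\mathfrak K$ is exactly the set of $\tau$-reducts of the closure of $\mathfrak P$ under $\mathfrak S$. *)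

(* Defs.v *)
(* Finite relational structures whose universes are finite
   subsets (given as sequences) of the ambient type nat, so that the
   set-theoretic conditions of the paper (disjointness, |M1| ∩ |M2| ⊆ constants)
   are meaningful. Classes are taken up to isomorphism (closure rules include
   isomorphic copies). *)
From mathcomp Require Import all_boot.
Set Implicit Arguments. Unset Strict Implicit. Unset Printing Implicit Defensive.

Record vocab := Vocab { sym : finType; ar : sym -> nat }.

Definition nice (v : vocab) : Prop := forall R : sym v, 0 < ar R.

Definition ext (v : vocab) (aux : finType) (arx : aux -> nat) : vocab :=
  @Vocab (sym v + aux)%type
    (fun s => match s with inl R => ar R | inr a => arx a end).
Arguments ext : clear implicits.

Record struc (v : vocab) := Struc {
  univ : seq nat;
  rel : sym v -> seq nat -> bool }.   (* interpretation, masked by [holds] *)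

Definition holds (v : vocab) (M : struc v) (R : sym v) (xs : seq nat) : bool :=
  [&& size xs == ar R, all (fun x => x \in univ M) xs & rel M R xs].

Definition iso (v : vocab) (M N : struc v) : Prop :=
  exists f : nat -> nat,
    {in univ M &, injective f} /\
    (forall y, y \in univ N <-> exists2 x, x \in univ M & f x = y) /\
    (forall R xs, all (fun x => x \in univ M) xs ->
       holds N R (map f xs) = holds M R xs).

Definition reduct (v : vocab) (aux : finType) (arx : aux -> nat)
  (N : struc (ext v aux arx)) : struc v :=
  @Struc v (univ N) (fun R xs => rel N (inl R) xs).

Inductive qf (v : vocab) :=
| QFalse
| QAtom of sym v & seq nat
| QEq of nat & nat
| QNeg of qf v
| QAnd of qf v & qf v.
Arguments QFalse {v}.

Fixpoint qf_eval (v : vocab) (M : struc v) (e : nat -> nat) (B : qf v) : bool :=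
  match B with
  | QFalse => false
  | QAtom R vs => holds M R (map e vs)
  | QEq i j => e i == e j
  | QNeg B1 => ~~ qf_eval M e B1
  | QAnd B1 B2 => qf_eval M e B1 && qf_eval M e B2
  end.

Fixpoint qf_scoped (v : vocab) (n : nat) (B : qf v) : bool :=
  match B with
  | QFalse => true
  | QAtom _ vs => all (fun i => i < n) vs
  | QEq i j => (i < n) && (j < n)
  | QNeg B1 => qf_scoped n B1
  | QAnd B1 B2 => qf_scoped n B1 && qf_scoped n B2
  end.

Definition disj_union (v : vocab) (M1 M2 : struc v) : struc v :=
  @Struc v (univ M1 ++ univ M2) (fun R xs => holds M1 R xs || holds M2 R xs).

Section Ext.
Variables (v : vocab) (aux : finType) (arx : aux -> nat).
Local Notation tp := (ext v aux arx).

Definition recolor (M : struc tp) (i j : aux) : struc tp :=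
  @Struc tp (univ M) (fun S xs =>
    if S == inr j then rel M (inr i) xs || rel M (inr j) xs
    else if S == inr i then false else rel M S xs).

Definition modify (M : struc tp) (R : sym tp) (B : qf tp) : struc tp :=
  @Struc tp (univ M) (fun S xs =>
    if S == R then qf_eval M (fun i => nth 0 xs i) B else rel M S xs).

Inductive pw_clos (nP : nat) (P : nat -> struc tp) : struc tp -> Prop :=
| pw_base i : i < nP -> pw_clos nP P (P i)
| pw_iso M N : pw_clos nP P M -> iso M N -> pw_clos nP P N
| pw_union M1 M2 : pw_clos nP P M1 -> pw_clos nP P M2 ->
    (forall x, x \in univ M1 -> x \notin univ M2) ->
    pw_clos nP P (disj_union M1 M2)
| pw_recolor M i j : arx i = 1 -> arx j = 1 -> pw_clos nP P M ->
    pw_clos nP P (recolor M i j)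
| pw_modify M R B : qf_scoped (ar R) B -> pw_clos nP P M ->
    pw_clos nP P (modify M R B).
End Ext.

Definition pw_class (v : vocab) (m k : nat) (K : struc v -> Prop) : Prop :=
  exists (aux : finType) (arx : aux -> nat),
    #|aux| = k /\ (forall a, arx a <= m) /\
    exists (nP : nat) (P : nat -> struc (ext v aux arx)),
      forall M, K M <-> exists N, pw_clos nP P N /\ M = reduct N.

Record kstruc (v : vocab) := KStruc { kS : struc v; kc : seq nat }.
(* k = size (kc M) *)

Definition kwf (v : vocab) (M : kstruc v) : Prop :=
  all (fun a => a \in univ (kS M)) (kc M).

Definition kiso (v : vocab) (M N : kstruc v) : Prop :=
  exists f : nat -> nat,
    {in univ (kS M) &, injective f} /\
    (forall y, y \in univ (kS N) <-> exists2 x, x \in univ (kS M) & f x = y) /\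
    (forall R xs, all (fun x => x \in univ (kS M)) xs ->
       holds (kS N) R (map f xs) = holds (kS M) R xs) /\
    map f (kc M) = kc N.

(* quantifier-free n-type of x_0..x_(n-1) over k1+k2 constants and two unary
   predicates U1 U2: the set of true atomic formulas.  Terms are indexed by
   'I_(n+k1+k2): first the variables, then the constants of M1, then of M2. *)
Definition patom (N : nat) : finType := (('I_N * 'I_N) + 'I_N + 'I_N)%type.
Definition ptype (n k1 k2 : nat) := {set patom (n + k1 + k2)}.

(* quantifier-free v-type of (x_i)_{i in w}: true atomic formulas among those
   variables (equalities and relation atoms); atoms mentioning a variable
   outside w are (canonically) absent. *)
Definition qatom (v : vocab) (n : nat) : finType :=
  (('I_n * 'I_n) + {R : sym v & (ar R).-tuple 'I_n})%type.
Definition qtype (v : vocab) (n : nat) := {set qatom v n}.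

Record addop (v : vocab) := AddOp {
  ao_k : nat; ao_k1 : nat; ao_k2 : nat;
  ao_A1 : {set 'I_ao_k1}; ao_A2 : {set 'I_ao_k2};
  ao_g1 : 'I_ao_k1 -> 'I_ao_k; ao_g2 : 'I_ao_k2 -> 'I_ao_k;
  ao_B1 : {set 'I_ao_k1 * 'I_ao_k1}; ao_B2 : {set 'I_ao_k2 * 'I_ao_k2};
  ao_B : {set 'I_ao_k1 * 'I_ao_k2};
  ao_f : forall R : sym v, {set 'I_(ar R)} -> {set 'I_(ar R)} ->
           ptype (ar R) ao_k1 ao_k2 -> qtype v (ar R) -> qtype v (ar R) -> bool }.

Definition addop_ok (v : vocab) (s : addop v) : Prop :=
  {in ao_A1 s &, injective (@ao_g1 v s)} /\
  {in ao_A2 s &, injective (@ao_g2 v s)} /\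
  (forall i j, i \in ao_A1 s -> j \in ao_A2 s -> ao_g1 i != ao_g2 j) /\
  (forall t, (exists2 i, i \in ao_A1 s & ao_g1 i = t) \/
             (exists2 j, j \in ao_A2 s & ao_g2 j = t)).

Section Sum.
Variables (v : vocab) (s : addop v) (M1 M2 : kstruc v).
Local Notation k := (ao_k s). Local Notation k1 := (ao_k1 s).
Local Notation k2 := (ao_k2 s).
Local Notation c1 := (kc M1). Local Notation c2 := (kc M2).

Definition sum_ok : Prop :=
  kwf M1 /\ kwf M2 /\ size c1 = k1 /\ size c2 = k2 /\
  (forall x, x \in univ (kS M1) -> x \in univ (kS M2) -> x \in c1 /\ x \in c2) /\
  (forall i j : 'I_k1, (nth 0 c1 i == nth 0 c1 j) = ((i, j) \in ao_B1 s)) /\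
  (forall i j : 'I_k2, (nth 0 c2 i == nth 0 c2 j) = ((i, j) \in ao_B2 s)) /\
  (forall (i : 'I_k1) (j : 'I_k2), (nth 0 c1 i == nth 0 c2 j) = ((i, j) \in ao_B s)).

Definition sum_const (t : 'I_k) : nat :=
  if [pick i in ao_A1 s | ao_g1 i == t] is Some i then nth 0 c1 i
  else if [pick j in ao_A2 s | ao_g2 j == t] is Some j then nth 0 c2 j
  else 0.

Definition sum_univ : seq nat :=
  [seq x <- univ (kS M1) | x \notin c1] ++ [seq x <- univ (kS M2) | x \notin c2] ++
  [seq nth 0 c1 i | i : 'I_k1 in ao_A1 s] ++ [seq nth 0 c2 j | j : 'I_k2 in ao_A2 s].

Definition ptype_of (n : nat) (xs : seq nat) : ptype n k1 k2 :=
  let tval (t : 'I_(n + k1 + k2)) :=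
    if t < n then nth 0 xs t
    else if t < n + k1 then nth 0 c1 (t - n) else nth 0 c2 (t - n - k1) in
  [set a : patom (n + k1 + k2) | match a with
     | inl (inl tt') => tval tt'.1 == tval tt'.2
     | inl (inr t) => tval t \in univ (kS M1)
     | inr t => tval t \in univ (kS M2) end].

Definition qtype_of (M : struc v) (n : nat) (w : {set 'I_n}) (xs : seq nat)
  : qtype v n :=
  [set a : qatom v n | match a with
     | inl ij => [&& ij.1 \in w, ij.2 \in w & nth 0 xs ij.1 == nth 0 xs ij.2]
     | inr (existT R tu) =>
         all (fun i => i \in w) tu && holds M R (map (fun i : 'I_n => nth 0 xs i) tu)
     end].

Definition sum_rel (R : sym v) (xs : seq nat) : bool :=
  let w1 := [set i : 'I_(ar R) | nth 0 xs i \in univ (kS M1)] in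
  let w2 := [set i : 'I_(ar R) | nth 0 xs i \in univ (kS M2)] in
  ao_f w1 w2 (ptype_of (ar R) xs)
       (qtype_of (kS M1) w1 xs) (qtype_of (kS M2) w2 xs).

Definition ksum : kstruc v :=
  @KStruc v (@Struc v sum_univ sum_rel) (map sum_const (enum 'I_k)).
End Sum.

Inductive kclos (v : vocab) (nP : nat) (P : nat -> kstruc v)
          (nS : nat) (S : nat -> addop v) : kstruc v -> Prop :=
| kc_base i : i < nP -> kclos nP P nS S (P i)
| kc_iso M N : kclos nP P nS S M -> kiso M N -> kclos nP P nS S N
| kc_sum i M1 M2 : i < nS -> kclos nP P nS S M1 -> kclos nP P nS S M2 ->
    sum_ok (S i) M1 M2 -> kclos nP P nS S (ksum (S i) M1 M2).

Definition constructible (v : vocab) (mstar kstar : nat) (K : struc v -> Prop)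
  : Prop :=
  exists (aux : finType) (arx : aux -> nat),
    (forall a, arx a <= mstar) /\
    exists (nP : nat) (P : nat -> kstruc (ext v aux arx))
           (nS : nat) (S : nat -> addop (ext v aux arx)),
      (forall i, i < nP -> kwf (P i) /\ size (kc (P i)) <= kstar) /\
      (forall i, i < nS -> addop_ok (S i) /\
          [/\ ao_k (S i) <= kstar, ao_k1 (S i) <= kstar & ao_k2 (S i) <= kstar]) /\
      forall M, K M <-> exists N, kclos nP P nS S N /\ M = reduct (kS N).

(* Main.v *)
From Stdlib Require Import ClassicalEpsilon.
Require Import Defs.
From mathcomp Require Import all_boot.
Set Implicit Arguments. Unset Strict Implicit. Unset Printing Implicit Defensive.

Section Main.
Variables (tau : vocab) (aux : finType) (arx : aux -> nat).
Local Notation tp := (ext tau aux arx).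

Definition TT := {ffun {S : sym tp & qtype tp (ar S)} -> bool}.

Definition tr (T : TT) (M : struc tp) : struc tp :=
  @Struc tp (univ M) (fun R xs => T (existT _ R (qtype_of M [set: 'I_(ar R)] xs))).

Definition heq (M N : struc tp) :=
  univ M =i univ N /\ forall R xs, holds M R xs = holds N R xs.

Lemma heq_refl (M : struc tp) : heq M M. Proof. by split. Qed.
Lemma heq_sym (M N : struc tp) : heq M N -> heq N M.
Proof. by case=> H1 H2; split=> // [x|R xs]; rewrite ?H1 ?H2. Qed.
Lemma heq_trans (M N O : struc tp) : heq M N -> heq N O -> heq M O.
Proof. by case=> H1 H2 [H3 H4]; split=> [x|R xs]; rewrite ?H1 ?H2 ?H3 ?H4. Qed.

Lemma heq_iso (M N : struc tp) : heq M N -> iso M N.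
Proof.
case=> H1 H2; exists id; split; first by [].
split; first by move=> y; rewrite -H1; split=> [h|[x h <-]]//; exists y.
by move=> R xs _; rewrite map_id H2.
Qed.

Lemma all_univ_eq (M N : struc tp) xs : univ M =i univ N ->
  all (fun x => x \in univ M) xs = all (fun x => x \in univ N) xs.
Proof. by move=> H; apply: eq_all => x; rewrite H. Qed.

Lemma qtype_heq (M N : struc tp) n (w : {set 'I_n}) xs :
  (forall R xs, holds M R xs = holds N R xs) -> qtype_of M w xs = qtype_of N w xs.
Proof. by move=> H; apply/setP => -[[i j]|[S tu]]; rewrite !inE ?H. Qed.

Lemma tr_holds T (M : struc tp) (R : sym tp) xs : holds (tr T M) R xs =
  [&& size xs == ar R, all (fun x => x \in univ M) xs &
      T (existT _ R (qtype_of M [set: 'I_(ar R)] xs))].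
Proof. by []. Qed.

Lemma heq_tr T (M N : struc tp) : heq M N -> heq (tr T M) (tr T N).
Proof.
case=> H1 H2; split=> [//|R xs]; rewrite !tr_holds (all_univ_eq _ H1).
by rewrite (qtype_heq _ _ H2).
Qed.

Lemma tr_iso T (M N : struc tp) : iso M N -> iso (tr T M) (tr T N).
Proof.
case=> f [finj [fon fh]]; exists f; split=> //; split=> // R xs xsM.
rewrite !tr_holds size_map xsM /=.
have ->: all (fun x => x \in univ (tr T N)) (map f xs).
  by apply/allP => _ /mapP [x xin ->]; apply/fon; exists x => //; move/allP: xsM; apply.
case: eqP => //= Hs; congr (T (existT _ R _)).
apply/setP => -[[i j]|[S tu]]; rewrite !inE /=.
- have lt (k : 'I_(ar R)) : k < size xs by rewrite Hs.
  have inM (k : 'I_(ar R)) : nth 0 xs k \in univ M.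
    by move/allP: xsM; apply; apply: mem_nth.
  rewrite !(nth_map 0) ?lt //.
  by rewrite (inj_in_eq finj) ?inM.
- congr (_ && _).
  have ->: map (fun i : 'I_(ar R) => nth 0 (map f xs) i) tu
       = map f (map (fun i : 'I_(ar R) => nth 0 xs i) tu).
    by rewrite -map_comp; apply: eq_map => k /=; rewrite (nth_map 0) // Hs.
  apply: fh; apply/allP => _ /mapP [k _ ->]; move/allP: xsM; apply; apply: mem_nth.
  by rewrite Hs.
Qed.

Definition atomq n (q : qtype tp n) (S : sym tp) (l : seq nat) : bool :=
  [exists tu : (ar S).-tuple 'I_n,
     (map val tu == l) && (inr (existT _ S tu) \in q)].

Definition eqq n (q : qtype tp n) (i j : nat) : bool :=
  [exists p : 'I_n * 'I_n, [&& val p.1 == i, val p.2 == j & inl p \in q]].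

Lemma seq_ord n (l : seq nat) : all (fun i => i < n) l ->
  exists s : seq 'I_n, map val s = l.
Proof.
elim: l => [|x l IH] /=; first by exists [::].
case/andP=> xn /IH [s <-]; by exists (Ordinal xn :: s).
Qed.

Lemma atomqE (M : struc tp) n xs S l :
  atomq (qtype_of M [set: 'I_n] xs) S l =
  [&& size l == ar S, all (fun i => i < n) l & holds M S (map (nth 0 xs) l)].
Proof.
apply/existsP/idP.
- case=> tu /andP [/eqP <-]; rewrite inE /= => /andP [_ H].
  rewrite size_map size_tuple eqxx /= -map_comp.
  apply/andP; split; first by apply/allP => _ /mapP [k _ ->].
  by [].
- case/and3P => /eqP sz al h.
  case: (seq_ord al) => s sE.
  have szs : size s == ar S by rewrite -sz -sE size_map.
  exists (Tuple szs); rewrite /= sE eqxx /= inE /=.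
  apply/andP; split; first by apply/allP => k; rewrite in_setT.
  by rewrite -sE -map_comp in h.
Qed.

Lemma eqqE (M : struc tp) n xs i j :
  eqq (qtype_of M [set: 'I_n] xs) i j =
  [&& i < n, j < n & nth 0 xs i == nth 0 xs j].
Proof.
apply/existsP/idP.
- case=> -[a b] /and3P [/eqP <- /eqP <-]; rewrite inE /= !in_setT /= => H.
  by rewrite !ltn_ord.
- case/and3P => i_n j_n h; exists (Ordinal i_n, Ordinal j_n).
  by rewrite /= !eqxx inE /= !in_setT.
Qed.

Fixpoint qeval n (q : qtype tp n) (B : qf tp) : bool :=
  match B with
  | QFalse => false
  | QAtom Sy vs => atomq q Sy vs
  | QEq i j => eqq q i j
  | QNeg B1 => ~~ qeval q B1
  | QAnd B1 B2 => qeval q B1 && qeval q B2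
  end.

Lemma qevalE (M : struc tp) n xs B : qf_scoped n B ->
  qeval (qtype_of M [set: 'I_n] xs) B = qf_eval M (nth 0 xs) B.
Proof.
elim: B => [|Sy vs|i j|B1 IH|B1 IH1 B2 IH2] /=.
- by [].
- move=> al; rewrite atomqE al /= andbC.
  rewrite /holds size_map; case: (size vs == ar Sy); by rewrite ?andbF ?andbT.
- by move=> /andP [i_n j_n]; rewrite eqqE i_n j_n.
- by move=> /IH ->.
- by move=> /andP [/IH1 -> /IH2 ->].
Qed.

Lemma map_nth_id (xs : seq nat) : map (nth 0 xs) (iota 0 (size xs)) = xs.
Proof. by rewrite map_nth_iota0 // take_size. Qed.

Lemma all_iota n : all (fun i => i < n) (iota 0 n).
Proof. by apply/allP => i; rewrite mem_iota. Qed.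

Lemma atomq_id (M : struc tp) n xs S : size xs = n -> ar S = n ->
  atomq (qtype_of M [set: 'I_n] xs) S (iota 0 n) = holds M S xs.
Proof.
move=> sx sS; rewrite atomqE size_iota sS eqxx all_iota -sx map_nth_id.
by [].
Qed.

Definition Tid : TT := [ffun sq => atomq (tagged sq) (tag sq) (iota 0 (ar (tag sq)))].

Lemma tr_id (M : struc tp) : heq (tr Tid M) M.
Proof.
split=> // R xs; rewrite tr_holds ffunE /=.
case: eqP => [sz|sz]; last by rewrite /holds; case: eqP.
by rewrite atomq_id // /holds sz eqxx /= andbA andbb.
Qed.

Definition Trc (i j : aux) : TT := [ffun sq : {S : sym tp & qtype tp (ar S)} =>
  if tag sq == inr j then atomq (tagged sq) (inr i) (iota 0 (ar (tag sq)))
     || atomq (tagged sq) (inr j) (iota 0 (ar (tag sq)))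
  else if tag sq == inr i then false
  else atomq (tagged sq) (tag sq) (iota 0 (ar (tag sq)))].

Lemma tr_rc (M : struc tp) i j : arx i = 1 -> arx j = 1 ->
  heq (tr (Trc i j) M) (recolor M i j).
Proof.
move=> ai aj; split=> // R xs; rewrite tr_holds ffunE /=.
rewrite /holds /=.
case: eqP => [sz|]; last by [].
rewrite /=; case al: (all _ xs) => //=.
case: eqP => [eR|nj].
  subst R; rewrite /= in sz *.
  have e1 := @atomq_id M (arx j) xs (inr i) sz (etrans ai (esym aj)).
  have e2 := @atomq_id M (arx j) xs (inr j) sz erefl.
  by rewrite e1 e2 /holds /= al ai sz aj eqxx.
case: eqP => [_|ni] //.
by rewrite atomq_id // /holds sz eqxx al.
Qed.


Definition Tmd (R : sym tp) (B : qf tp) : TT := [ffun sq : {S : sym tp & qtype tp (ar S)} =>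
  if tag sq == R then qeval (tagged sq) B
  else atomq (tagged sq) (tag sq) (iota 0 (ar (tag sq)))].

Lemma tr_md (M : struc tp) R B : qf_scoped (ar R) B ->
  heq (tr (Tmd R B) M) (modify M R B).
Proof.
move=> sc; split=> // S xs; rewrite tr_holds ffunE /=.
rewrite /holds /=.
case: eqP => [sz|]; last by [].
rewrite /=; case al: (all _ xs) => //=.
case: eqP => [eR|nR].
  by subst S; rewrite qevalE.
by rewrite atomq_id // /holds sz eqxx al.
Qed.

Definition proj n (S : sym tp) (tu : (ar S).-tuple 'I_n) (q : qtype tp n)
  : qtype tp (ar S) :=
  [set a : qatom tp (ar S) | match a with
     | inl ij => inl (tnth tu ij.1, tnth tu ij.2) \in q
     | inr (existT S' tu') => inr (existT _ S' [tuple of map (tnth tu) tu']) \in q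
     end].

Lemma all_setT (T : finType) (s : seq T) : all (fun i => i \in [set: T]) s.
Proof. by apply/allP => x; rewrite in_setT. Qed.

Lemma proj_qtype (M : struc tp) n S (tu : (ar S).-tuple 'I_n) xs :
  proj tu (qtype_of M [set: 'I_n] xs) =
  qtype_of M [set: 'I_(ar S)] (map (fun i : 'I_n => nth 0 xs i) tu).
Proof.
have key (k : 'I_(ar S)) :
    nth 0 (map (fun i : 'I_n => nth 0 xs i) tu) k = nth 0 xs (tnth tu k).
  have -> : map (fun i : 'I_n => nth 0 xs i) tu
          = val [tuple of map (fun i : 'I_n => nth 0 xs i) tu] by [].
  by rewrite -tnth_nth tnth_map.
apply/setP => -[[i j]|[S' tu']]; rewrite !inE /= ?in_setT /=.
  by rewrite !key.
rewrite !all_setT /=; congr (holds M S' _).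
rewrite -map_comp; apply: eq_map => k /=; by rewrite key.
Qed.

Definition lift (T0 : TT) n (q : qtype tp n) : qtype tp n :=
  [set a : qatom tp n | match a with
     | inl ij => inl ij \in q
     | inr (existT Sy tu) => T0 (existT _ Sy (proj tu q))
     end].

Lemma lift_qtype T0 (M : struc tp) n xs : size xs = n ->
  all (fun x => x \in univ M) xs ->
  qtype_of (tr T0 M) [set: 'I_n] xs = lift T0 (qtype_of M [set: 'I_n] xs).
Proof.
move=> sz al; apply/setP => -[[i j]|[Sy tu]]; rewrite !inE /= ?in_setT //=.
rewrite all_setT /= tr_holds size_map size_tuple eqxx /= proj_qtype.
have -> : all (fun x => x \in univ M) (map (fun i : 'I_n => nth 0 xs i) tu).
  apply/allP => _ /mapP [k _ ->]; move/allP: al; apply; apply: mem_nth.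
  by rewrite sz.
by [].
Qed.

Definition comp (T T0 : TT) : TT := [ffun sq : {S : sym tp & qtype tp (ar S)} =>
  T (existT _ (tag sq) (lift T0 (tagged sq)))].

Lemma tr_comp T T0 (M : struc tp) : heq (tr (comp T T0) M) (tr T (tr T0 M)).
Proof.
split=> // R xs; rewrite !tr_holds ffunE /=.
case: eqP => //= sz; case al: (all _ xs) => //=.
by rewrite lift_qtype.
Qed.

Lemma wid_le n : n <= n + 0 + 0. Proof. by rewrite !addn0. Qed.
Definition wid n (i : 'I_n) : 'I_(n + 0 + 0) := widen_ord (@wid_le n) i.

Definition Uq n (p : ptype n 0 0) (q1 q2 : qtype tp n) : qtype tp n :=
  [set a : qatom tp n | match a with
     | inl ij => inl (inl (wid ij.1, wid ij.2)) \in p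
     | inr st => (inr st \in q1) || (inr st \in q2)
     end].

Definition sumop (T : TT) : addop tp :=
  @AddOp tp 0 0 0 set0 set0 id id set0 set0 set0
    (fun R w1 w2 p q1 q2 => T (existT _ R (Uq p q1 q2))).

Lemma sum_univ_mem T (N1 N2 : kstruc tp) x : kc N1 = [::] -> kc N2 = [::] ->
  (x \in sum_univ (sumop T) N1 N2) = (x \in univ (kS N1) ++ univ (kS N2)).
Proof.
move=> c1 c2; rewrite /sum_univ c1 c2 !mem_cat !mem_filter /=.
have e (A : {set 'I_0}) : (x \in [seq nth 0 [::] i | i : 'I_0 in A]) = false.
  by apply/negbTE/negP => /imageP [[i Hi]].
by rewrite !e !orbF.
Qed.

Lemma ksum_heq T (N1 N2 : kstruc tp) : sum_ok (sumop T) N1 N2 ->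
  heq (kS (ksum (sumop T) N1 N2)) (tr T (disj_union (kS N1) (kS N2))).
Proof.
case=> _ [_ [s1 [s2 _]]].
have c1 := size0nil s1; have c2 := size0nil s2.
have um x : (x \in univ (kS (ksum (sumop T) N1 N2))) =
            (x \in univ (disj_union (kS N1) (kS N2))) by rewrite /= sum_univ_mem.
split=> // R xs.
rewrite tr_holds /holds /= (eq_all um) /=.
case: eqP => //= sz; case al: (all _ xs) => //=.
rewrite /sum_rel /=; congr (T (existT _ R _)).
apply/setP => -[[i j]|[Sy tu]]; rewrite !inE /=.
  by rewrite !ltn_ord.
rewrite all_setT /=.
set ys := map _ tu.
have A (M : struc tp) : all (fun i => i \in [set i0 : 'I_(ar R) | nth 0 xs i0 \in univ M]) tu
    = all (fun x => x \in univ M) ys.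
  by rewrite all_map; apply: eq_all => k; rewrite inE.
rewrite !A /holds /=.
have ->: all (fun x => x \in univ (kS N1) ++ univ (kS N2)) ys.
  apply/allP => _ /mapP [k _ ->]; move/allP: al; apply; apply: mem_nth.
  by rewrite sz.
rewrite /holds; case: (all (fun x => x \in univ (kS N1)) ys);
  case: (all (fun x => x \in univ (kS N2)) ys); case: (size ys == _);
  by rewrite /= ?andbF ?orbF.
Qed.

Lemma kiso_of (N : kstruc tp) (M : struc tp) : kc N = [::] -> iso (kS N) M ->
  kiso N (KStruc M [::]).
Proof.
move=> c [f [h1 [h2 h3]]]; exists f; split=> //; split=> //; split=> //.
by rewrite c.
Qed.

Section Clos.
Variables (nP : nat) (P : nat -> struc tp).

Definition real (T : TT) := forall M, pw_clos nP P M -> pw_clos nP P (tr T M).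
Definition realb (T : TT) : bool :=
  if excluded_middle_informative (real T) then true else false.
Definition L : seq TT := [seq T <- enum TT | realb T].
Definition LP : seq (nat * TT) := [seq (i, T) | i <- iota 0 nP, T <- L].
Definition P' (j : nat) : kstruc tp :=
  let: (i, T) := nth (0, Tid) LP j in KStruc (tr T (P i)) [::].
Definition S' (j : nat) : addop tp := sumop (nth Tid L j).

Lemma memL T : (T \in L) <-> real T.
Proof.
rewrite mem_filter mem_enum andbT /realb.
by case: excluded_middle_informative.
Qed.

Lemma memLP i T : ((i, T) \in LP) = (i < nP) && (T \in L).
Proof.
apply/allpairsP/andP => [[[a b] [ha hb [-> ->]]]|[h1 h2]].
  by rewrite mem_iota in ha.
by exists (i, T); rewrite mem_iota.
Qed.

Lemma real_id : real Tid.
Proof. by move=> M h; apply: pw_iso h _; apply: heq_iso; apply: heq_sym; apply: tr_id. Qed.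

Lemma real_comp T T0 : real T -> real T0 -> real (comp T T0).
Proof.
move=> h h0 M hM; apply: pw_iso (h _ (h0 _ hM)) _.
by apply: heq_iso; apply: heq_sym; apply: tr_comp.
Qed.

Local Notation KC := (kclos (size LP) P' (size L) S').

Lemma dirA N : KC N -> pw_clos nP P (kS N) /\ kc N = [::].
Proof.
elim=> [j jlt|M N' _ [IH1 IH2] [f [h1 [h2 [h3 h4]]]]|i M1 M2 ilt _ [I1 c1] _ [I2 c2] ok].
- rewrite /P'; have := mem_nth (0, Tid) jlt.
  case: (nth _ _ _) => i T; rewrite memLP => /andP [ilt /memL rT].
  by split=> //; apply: rT; apply: pw_base.
- split; first by apply: pw_iso IH1 _; exists f.
  by rewrite -h4 IH2.
- have rT : real (nth Tid L i) by apply/memL; apply: mem_nth.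
  split; last by rewrite /= enum_ord0.
  apply: pw_iso; last by apply: heq_iso; apply: heq_sym; apply: ksum_heq ok.
  apply: rT; apply: pw_union => // x x1; apply/negP => x2.
  by case: ok => _ [_ [_ [_ [/(_ x x1 x2) []]]]]; rewrite c1.
Qed.

Lemma idxL T : real T -> exists2 j, j < size L & nth Tid L j = T.
Proof.
move/memL => h; exists (index T L); first by rewrite index_mem.
by rewrite nth_index.
Qed.

Lemma dirC N : KC N -> forall T, real T -> KC (KStruc (tr T (kS N)) [::]).
Proof.
elim=> [j jlt|M N' _ IH hiso|i M1 M2 ilt h1 _ h2 _ ok] T rT.
- have := mem_nth (0, Tid) jlt.
  case E: (nth _ _ _) => [i T0]; rewrite memLP => /andP [ilt /memL rT0].
  have eP : P' j = KStruc (tr T0 (P i)) [::] by rewrite /P' E.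
  rewrite eP /=.
  have rc := real_comp rT rT0.
  have jm : (i, comp T T0) \in LP by rewrite memLP ilt; apply/memL.
  have jlt' : index (i, comp T T0) LP < size LP by rewrite index_mem.
  have eP2 : P' (index (i, comp T T0) LP) = KStruc (tr (comp T T0) (P i)) [::].
    by rewrite /P' nth_index.
  have h : KC (P' (index (i, comp T T0) LP)) by apply: kc_base.
  rewrite eP2 in h.
  apply: kc_iso h _; apply: kiso_of => //; apply: heq_iso; apply: tr_comp.
- apply: kc_iso (IH T rT) _; apply: kiso_of => //; apply: tr_iso.
  by case: hiso => f [a [b [c _]]]; exists f.
- set T0 := nth Tid L i.
  have rT0 : real T0 by apply/memL; apply: mem_nth.
  have [j jlt jE] := idxL (real_comp rT rT0).
  have okj : sum_ok (S' j) M1 M2 := ok.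
  have := kc_sum jlt h1 h2 okj => h.
  apply: kc_iso h _; apply: kiso_of; first by rewrite /= enum_ord0.
  have okj' : sum_ok (sumop (comp T T0)) M1 M2 by move: okj; rewrite /S' jE.
  apply: heq_iso; rewrite /S' jE.
  apply: heq_trans (ksum_heq okj') _.
  apply: heq_trans (tr_comp _ _ _) _; apply: heq_tr; apply: heq_sym.
  exact: ksum_heq ok.
Qed.

Lemma dirB M : pw_clos nP P M -> KC (KStruc M [::]).
Proof.
elim=> [i ilt|M1 N1 _ IH hiso|M1 M2 _ IH1 _ IH2 disj|M1 i j ai aj _ IH|M1 R B sc _ IH].
- have jm : (i, Tid) \in LP by rewrite memLP ilt; apply/memL; apply: real_id.
  have jlt' : index (i, Tid) LP < size LP by rewrite index_mem.
  have eP2 : P' (index (i, Tid) LP) = KStruc (tr Tid (P i)) [::].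
    by rewrite /P' nth_index.
  have h : KC (P' (index (i, Tid) LP)) by apply: kc_base.
  rewrite eP2 in h.
  apply: kc_iso h _; apply: kiso_of => //; apply: heq_iso; apply: tr_id.
- by apply: kc_iso IH _; apply: kiso_of.
- have [j jlt jE] := idxL real_id.
  have ok : sum_ok (S' j) (KStruc M1 [::]) (KStruc M2 [::]).
    split=> //; split=> //; split=> //; split=> //; split.
      by move=> x /= x1 x2; move: (disj x x1); rewrite x2.
    by split; [|split]; case.
  have := kc_sum jlt IH1 IH2 ok => h.
  apply: kc_iso h _; apply: kiso_of; first by rewrite /= enum_ord0.
  have ok' : sum_ok (sumop Tid) (KStruc M1 [::]) (KStruc M2 [::]) by move: ok; rewrite /S' jE.
  apply: heq_iso; rewrite /S' jE.
  by apply: heq_trans (ksum_heq ok') _; apply: tr_id.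
- have rT : real (Trc i j).
    move=> M' h; apply: pw_iso (pw_recolor ai aj h) _.
    by apply: heq_iso; apply: heq_sym; apply: tr_rc.
  apply: kc_iso (dirC IH rT) _; apply: kiso_of => //.
  by apply: heq_iso; apply: tr_rc.
- have rT : real (Tmd R B).
    move=> M' h; apply: pw_iso (pw_modify sc h) _.
    by apply: heq_iso; apply: heq_sym; apply: tr_md.
  apply: kc_iso (dirC IH rT) _; apply: kiso_of => //.
  by apply: heq_iso; apply: tr_md.
Qed.
End Clos.
End Main.

Theorem mainTheorem4 (tau : vocab) (m k : nat) (K : struc tau -> Prop) :
  nice tau -> pw_class m k K -> constructible m 0 K.
Proof.
move=> _ [aux [arx [_ [arm [nP [P HK]]]]]].
exists aux, arx; split=> //.
exists (size (LP nP P)), (P' nP P), (size (L nP P)), (S' nP P).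
split.
  by move=> i _; rewrite /P'; case: (nth _ _ _).
split.
  move=> i _; split=> //; rewrite /S' /addop_ok /=.
  split; first by case.
  split; first by case.
  split; first by case.
  by case.
move=> M; rewrite HK; split.
- case=> N [hN ->]; exists (KStruc N [::]); split=> //; exact: dirB.
- case=> N [hN ->]; exists (kS N); split=> //; exact: (dirA hN).1.
Qed.
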